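(* Given $t\ge0$, define \[ \varphi(u)=2\sqrt{\frac{u+1}{3}}\cos\Big[\tfrac13\arccos\Big(-t\Big(\frac{u+1}{3}\Big)^{-3/2}\Big)\Big] \] for $u\ge 3t^{2/3}-1$. Then: (i) $\varphi(u)$ and $\varphi^2(u)$ are strictly increasing on $[3t^{2/3}-1,\infty)$; (ii) if $0\le t\le1$, then $\varphi(2t)=1$; (iii) if $0\le t<1$, then $\varphi^2(u)$ is Lipschitz continuous on $[2t,\infty)$. *)

(* Defs.v *)
From Stdlib Require Import Reals Lra.
Open Scope R_scope.

(* t^(2/3) for t >= 0, with the convention 0^(2/3) = 0
   (Stdlib's Rpower is only meaningful for a positive base). *)
Definition pow23 (t : R) : R :=
  if Rle_dec t 0 then 0 else Rpower t (2/3).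

Definition phi (t u : R) : R :=
  2 * sqrt ((u + 1) / 3) *
  cos (/3 * acos (- t * Rpower ((u + 1) / 3) (- (3/2)))).

(* Main.v *)
Require Import Defs.
From Stdlib Require Import Reals Lra Psatz.
Open Scope R_scope.

Lemma cos3 (a : R) : cos (3 * a) = 4 * cos a ^ 3 - 3 * cos a.
Proof.
  replace (3 * a) with (2 * a + a) by ring.
  rewrite cos_plus, cos_2a_cos, sin_2a.
  pose proof (sin2_cos2 a) as H. unfold Rsqr in H.
  replace (2 * sin a * cos a * sin a) with (2 * cos a * (sin a * sin a)) by ring.
  replace (sin a * sin a) with (1 - cos a * cos a) by lra. ring.
Qed.

Lemma rpow32 (w : R) : 0 < w -> Rpower w (- (3/2)) = / (sqrt w ^ 3).
Proof.
  intro Hw. rewrite Rpower_Ropp.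
  replace (3/2) with (/2 * INR 3) by (simpl; field).
  rewrite <- Rpower_mult, Rpower_pow by (unfold Rpower; apply exp_pos).
  rewrite Rpower_sqrt by exact Hw. reflexivity.
Qed.

Lemma key (t u : R) : 0 <= t -> 0 <= (u+1)/3 -> t <= sqrt ((u+1)/3) ^ 3 ->
  sqrt ((u+1)/3) <= phi t u /\ phi t u ^ 3 - (u+1) * phi t u + 2 * t = 0.
Proof.
  intros ht hw hs.
  set (w := (u+1)/3) in *. set (s := sqrt w) in *.
  assert (Hs0 : 0 <= s) by apply sqrt_pos.
  assert (Hss : s * s = w) by (apply sqrt_sqrt; exact hw).
  set (a := - t * Rpower w (- (3/2))).
  assert (Ha : s ^ 3 * a = - t /\ -1 <= a <= 0).
  { destruct (Req_dec t 0) as [->|Ht].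
    - unfold a. split; [ring| lra].
    - assert (Hsp : 0 < s).
      { destruct (Rle_lt_or_eq_dec 0 s Hs0) as [h|h]; auto.
        rewrite <- h in hs. simpl in hs. lra. }
      assert (Hwp : 0 < w) by nra.
      unfold a. rewrite rpow32 by exact Hwp. fold s.
      assert (H3 : 0 < s ^ 3) by (apply pow_lt; exact Hsp).
      split. field. lra.
      split.
      + apply Rmult_le_reg_r with (s^3); [exact H3|].
        replace (- t * / s ^ 3 * s ^ 3) with (- t) by (field; lra). lra.
      + assert (0 < / s^3) by (apply Rinv_0_lt_compat; exact H3). nra. }
  destruct Ha as [Ha Hab].
  set (th := acos a).
  pose proof (acos_bound a) as Hb. fold th in Hb.
  pose proof (cos_acos a ltac:(lra)) as Hc. fold th in Hc.
  assert (Hc3 : 4 * cos (/3 * th) ^ 3 - 3 * cos (/3 * th) = a).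
  { rewrite <- cos3. replace (3 * (/3 * th)) with th by field. exact Hc. }
  assert (Hge : 1/2 <= cos (/3 * th)).
  { rewrite <- cos_PI3. apply cos_decr_1; pose proof PI_RGT_0; lra. }
  unfold phi. fold w. fold s. fold a. fold th.
  split.
  - nra.
  - replace (u + 1) with (3 * (s*s)) by (rewrite Hss; unfold w; field).
    set (c := cos (/3 * th)) in *.
    replace ((2 * s * c) ^ 3 - 3 * (s * s) * (2 * s * c) + 2 * t)
      with (2 * (s^3 * (4 * c^3 - 3 * c)) + 2 * t) by ring.
    rewrite Hc3, Ha. ring.
Qed.

Lemma phi_nonneg (t u : R) : 0 <= t -> 0 <= (u+1)/3 -> t <= sqrt ((u+1)/3) ^ 3 ->
  0 <= phi t u.
Proof. intros. pose proof (sqrt_pos ((u+1)/3)). destruct (key t u); lra. Qed.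

Lemma mono (t u v : R) : 0 <= t -> 0 <= (u+1)/3 -> t <= sqrt ((u+1)/3) ^ 3 -> u < v ->
  phi t u < phi t v.
Proof.
  intros ht hw hs huv.
  assert (hwv : 0 < (v+1)/3) by lra.
  assert (hsv0 : 0 < sqrt ((v+1)/3)) by (apply sqrt_lt_R0; exact hwv).
  assert (hsuv : sqrt ((u+1)/3) <= sqrt ((v+1)/3)) by (apply sqrt_le_1_alt; lra).
  assert (hs' : t <= sqrt ((v+1)/3) ^ 3).
  { eapply Rle_trans; [exact hs|]. apply pow_incr. pose proof (sqrt_pos ((u+1)/3)); lra. }
  destruct (key t u ht hw hs) as [Hxs Hx].
  destruct (key t v ht (Rlt_le _ _ hwv) hs') as [Hys Hy].
  assert (Hvv : sqrt ((v+1)/3) * sqrt ((v+1)/3) = (v+1)/3) by (apply sqrt_sqrt; lra).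
  pose proof (sqrt_pos ((u+1)/3)).
  set (x := phi t u) in *. set (y := phi t v) in *. set (s := sqrt ((v+1)/3)) in *.
  destruct (Rlt_le_dec x y) as [h|h]; [exact h|exfalso].
  assert (Hfx : x^3 - (v+1)*x + 2*t = (u - v) * x) by lra.
  destruct (Req_dec x 0) as [Hx0|Hx0]. { lra. }
  assert (0 < x) by lra.
  assert (Hlt : x^3 - (v+1)*x + 2*t < 0) by (rewrite Hfx; nra).
  assert (E : (x^3 - (v+1)*x + 2*t) - (y^3 - (v+1)*y + 2*t)
              = (x - y) * (x*x + x*y + y*y - 3 * (s*s))) by (rewrite Hvv; field).
  assert (0 <= (x - y) * (x*x + x*y + y*y - 3 * (s*s))).
  { apply Rmult_le_pos; nra. }
  lra.
Qed.

Lemma dom23 (t u : R) : 0 <= t -> 3 * pow23 t - 1 <= u ->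
  0 <= (u+1)/3 /\ t <= sqrt ((u+1)/3) ^ 3.
Proof.
  intros ht hu. unfold pow23 in hu.
  destruct (Rle_dec t 0) as [h|h].
  - assert (t = 0) by lra. subst. split; [lra|]. apply pow_le, sqrt_pos.
  - assert (tp : 0 < t) by lra.
    set (r := Rpower t (2/3)) in *.
    assert (rp : 0 < r) by (unfold r, Rpower; apply exp_pos).
    assert (hw : 0 <= (u+1)/3) by lra.
    split; [exact hw|].
    assert (Hr3 : r ^ 3 = t ^ 2).
    { unfold r. rewrite <- (Rpower_pow 3) by (unfold Rpower; apply exp_pos).
      rewrite Rpower_mult. rewrite <- Rpower_pow by exact tp.
      f_equal. simpl. field. }
    pose proof (sqrt_pos ((u+1)/3)) as Hs0.
    pose proof (sqrt_sqrt ((u+1)/3) hw) as Hss.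
    set (s := sqrt ((u+1)/3)) in *.
    assert (H6 : t^2 <= (s^3)^2).
    { rewrite <- Hr3. replace ((s^3)^2) with ((s*s)^3) by ring. rewrite Hss.
      apply pow_incr. lra. }
    assert (0 <= s^3) by (apply pow_le; exact Hs0).
    nra.
Qed.

Lemma dom2t (t u : R) : 0 <= t -> 2 * t <= u ->
  0 <= (u+1)/3 /\ t <= sqrt ((u+1)/3) ^ 3.
Proof.
  intros ht hu.
  assert (hw : 0 <= (u+1)/3) by lra. split; [exact hw|].
  pose proof (sqrt_pos ((u+1)/3)) as Hs0.
  pose proof (sqrt_sqrt ((u+1)/3) hw) as Hss.
  set (s := sqrt ((u+1)/3)) in *.
  assert (H6 : t^2 <= (s^3)^2).
  { replace ((s^3)^2) with ((s*s)^3) by ring. rewrite Hss.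
    assert (((2*t+1)/3)^3 <= ((u+1)/3)^3) by (apply pow_incr; lra).
    assert (t^2 <= ((2*t+1)/3)^3).
    { assert (0 <= (t-1)^2 * (8*t+1)) by (apply Rmult_le_pos; [apply pow2_ge_0|lra]).
      replace (((2*t+1)/3)^3) with (t^2 + (t-1)^2*(8*t+1)/27) by field. lra. }
    lra. }
  assert (0 <= s^3) by (apply pow_le; exact Hs0).
  nra.
Qed.

Lemma phi2t (t : R) : 0 <= t -> t <= 1 -> phi t (2 * t) = 1.
Proof.
  intros ht ht1. destruct (dom2t t (2*t) ht (Rle_refl _)) as [hw hs].
  destruct (key t (2*t) ht hw hs) as [Hxs Hx].
  pose proof (sqrt_sqrt _ hw) as Hss. pose proof (sqrt_pos ((2*t+1)/3)).
  set (s := sqrt ((2*t+1)/3)) in *. set (x := phi t (2*t)) in *.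
  assert (s <= 1) by nra.
  destruct (Req_dec x 1) as [e|ne]; [exact e|exfalso].
  assert (E : (x^3 - (2*t+1)*x + 2*t) = (x - 1) * (x*x + x + 1 - 3 * (s*s)))
    by (rewrite Hss; field).
  destruct (Rlt_le_dec x 1).
  - assert (0 < x*x + x + 1 - 3*(s*s)) by nra. nra.
  - assert (0 < x*x + x + 1 - 3*(s*s)) by nra.
    assert (0 < x - 1) by lra. nra.
Qed.

Theorem lemma7 (t : R) (ht : 0 <= t) :
  (* (i) phi and phi^2 strictly increasing on [3 t^(2/3) - 1, oo) *)
  (forall u v, 3 * pow23 t - 1 <= u -> u < v -> phi t u < phi t v) /\
  (forall u v, 3 * pow23 t - 1 <= u -> u < v -> (phi t u)^2 < (phi t v)^2) /\
  (* (ii) *)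
  (t <= 1 -> phi t (2 * t) = 1) /\
  (* (iii) phi^2 Lipschitz on [2t, oo) *)
  (t < 1 -> exists L : R, forall u v, 2 * t <= u -> 2 * t <= v ->
      Rabs ((phi t u)^2 - (phi t v)^2) <= L * Rabs (u - v)).
Proof.
  split; [|split; [|split]].
  - intros u v hu huv. destruct (dom23 t u ht hu). apply mono; auto.
  - intros u v hu huv. destruct (dom23 t u ht hu).
    pose proof (mono t u v ht H H0 huv). pose proof (phi_nonneg t u ht H H0). nra.
  - apply phi2t; auto.
  - intros ht1. exists (/ (1 - t)). intros u v hu hv.
    assert (ge1 : forall w, 2 * t <= w -> 1 <= phi t w).
    { intros w hw. rewrite <- (phi2t t ht (Rlt_le _ _ ht1)).
      destruct (Req_dec w (2*t)) as [->|ne]; [lra|].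
      destruct (dom2t t (2*t) ht (Rle_refl _)).
      apply Rlt_le, mono; auto; lra. }
    pose proof (ge1 u hu) as Hx1. pose proof (ge1 v hv) as Hy1.
    destruct (dom2t t u ht hu) as [h1 h2]. destruct (key t u ht h1 h2) as [_ Hx].
    destruct (dom2t t v ht hv) as [h3 h4]. destruct (key t v ht h3 h4) as [_ Hy].
    set (x := phi t u) in *. set (y := phi t v) in *.
    set (P := x*y*(x+y)).
    assert (HP : 2 <= P) by (unfold P; nra).
    assert (Id : (x^2 - y^2) * (P - 2*t) = (u - v) * P).
    { assert (E : (x^2 - y^2) * (P - 2*t) - (u - v) * P
         = y*(x+y)*(x^3 - (u+1)*x + 2*t) - x*(x+y)*(y^3 - (v+1)*y + 2*t))
        by (unfold P; ring).
      rewrite Hx, Hy in E. lra. }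
    assert (IdA : Rabs (x^2 - y^2) * (P - 2*t) = Rabs (u - v) * P).
    { rewrite <- (Rabs_pos_eq (P - 2*t)) by nra. rewrite <- (Rabs_pos_eq P) at 2 by lra.
      rewrite <- !Rabs_mult. f_equal. exact Id. }
    pose proof (Rabs_pos (x^2 - y^2)). pose proof (Rabs_pos (u - v)).
    assert (Hk : Rabs (x^2 - y^2) * (1 - t) <= Rabs (u - v)).
    { assert (0 <= Rabs (x^2 - y^2) * (t * (P - 2))) by
        (apply Rmult_le_pos; [lra| apply Rmult_le_pos; lra]).
      assert (Rabs (x^2 - y^2) * (1 - t) * P <= Rabs (u - v) * P) by
        (rewrite <- IdA; nra).
      apply Rmult_le_reg_r with P; lra. }
    assert (0 < 1 - t) by lra.
    apply Rmult_le_reg_r with (1 - t); [lra|].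
    replace (/ (1 - t) * Rabs (u - v) * (1 - t)) with (Rabs (u - v)) by (field; lra).
    exact Hk.
Qed.
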